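(* Let $\mathcal{L}=(\mathrm{Fm},\vdash)$ be a logic. 1. If properties $\wedge_P$, $\vee_P$ and $\neg_W$ hold for $\mathcal{L}$, then $\neg\varphi\vee\neg\psi\vdash\neg(\varphi\wedge\psi)$ for all $\varphi,\psi\in\mathrm{Fm}$. 2. If in addition property $\neg_{Il}$ holds for $\mathcal{L}$, then $\neg(\varphi\wedge\psi)\vdash\neg\varphi\vee\neg\psi$ for all $\varphi,\psi\in\mathrm{Fm}$.
   Context: A logic is a pair $\mathcal{L}=(\mathrm{Fm},\vdash)$ where $\mathrm{Fm}$ is the term (formula) algebra in some signature over a set of propositional variables and $\vdash\subseteq\mathcal{P}(\mathrm{Fm})\times\mathrm{Fm}$ is a consequence relation: (a) $\varphi\in\Gamma$ implies $\Gamma\vdash\varphi$; (b) $\Gamma\vdash\varphi$ and $\Gamma\subseteq\Delta$ imply $\Delta\vdash\varphi$; (c) if $\Delta\vdash\varphi$ and $\Gamma\vdash\psi$ for all $\psi\in\Delta$, then $\Gamma\vdash\varphi$. Write $Cn(\Gamma)=\{\psi\mid\Gamma\vdash\psi\}$, $Cn(\varphi)=Cn(\{\varphi\})$, $Cn(\Gamma,\varphi)=Cn(\Gamma\cup\{\varphi\})$, and $\varphi\vdash\psi$ for $\{\varphi\}\vdash\psi$. Property $\wedge_P$: there is a binary term $x\wedge y$ with $Cn(\varphi\wedge\psi)=Cn(\{\varphi,\psi\})$ for all $\varphi,\psi$. Property $\vee_P$: there is a binary term $x\vee y$ with $Cn(\varphi\vee\psi)=Cn(\varphi)\cap Cn(\psi)$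 for all $\varphi,\psi$. Property $\neg_W$: there is a unary term $\neg x$ such that $\psi\in Cn(\varphi)$ implies $\neg\varphi\in Cn(\neg\psi)$ for all $\varphi,\psi$. For a logic with $\neg_W$ (for the term $\neg$), property $\neg_{Il}$: $Cn(\varphi)\subseteq Cn(\neg\neg\varphi)$ for all $\varphi$. *)

(* Defs.v *)
Set Implicit Arguments.

Inductive term (Op : Type) (ar : Op -> nat) (X : Type) : Type :=
| tvar : X -> term ar X
| tapp : forall o : Op, ({i : nat | i < ar o} -> term ar X) -> term ar X.

Arguments tvar {Op ar X} _.
Arguments tapp {Op ar X} _ _.

Fixpoint tsubst (Op : Type) (ar : Op -> nat) (X Y : Type)
  (s : X -> term ar Y) (t : term ar X) : term ar Y :=
  match t with
  | tvar x => s x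
  | tapp o args => tapp o (fun i => tsubst s (args i))
  end.

(* A binary term x /\ y is a term in two variables (true = x, false = y);
   its induced operation on formulas. *)
Definition binop (Op : Type) (ar : Op -> nat) (V : Type)
  (t : term ar bool) (a b : term ar V) : term ar V :=
  tsubst (fun v : bool => if v then a else b) t.

Definition unop (Op : Type) (ar : Op -> nat) (V : Type)
  (t : term ar unit) (a : term ar V) : term ar V :=
  tsubst (fun _ : unit => a) t.

Definition is_consequence (Fm : Type) (vd : (Fm -> Prop) -> Fm -> Prop) : Prop :=
  (forall (G : Fm -> Prop) phi, G phi -> vd G phi) /\
  (forall (G D : Fm -> Prop) phi, vd G phi -> (forall x, G x -> D x) -> vd D phi) /\
  (forall (G D : Fm -> Prop) phi,
      vd D phi -> (forall psi, D psi -> vd G psi) -> vd G phi).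

Definition single (Fm : Type) (a : Fm) : Fm -> Prop := fun x => x = a.
Definition pair (Fm : Type) (a b : Fm) : Fm -> Prop := fun x => x = a \/ x = b.

(* Cn(phi) = Cn({a,b}) etc., stated extensionally. *)
Definition conjP (Fm : Type) (vd : (Fm -> Prop) -> Fm -> Prop)
  (c : Fm -> Fm -> Fm) : Prop :=
  forall a b psi, vd (single (c a b)) psi <-> vd (pair a b) psi.

Definition disjP (Fm : Type) (vd : (Fm -> Prop) -> Fm -> Prop)
  (d : Fm -> Fm -> Fm) : Prop :=
  forall a b psi, vd (single (d a b)) psi <-> (vd (single a) psi /\ vd (single b) psi).

Definition negW (Fm : Type) (vd : (Fm -> Prop) -> Fm -> Prop)
  (n : Fm -> Fm) : Prop :=
  forall a b, vd (single a) b -> vd (single (n b)) (n a).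

Definition negIl (Fm : Type) (vd : (Fm -> Prop) -> Fm -> Prop)
  (n : Fm -> Fm) : Prop :=
  forall a psi, vd (single a) psi -> vd (single (n (n a))) psi.

(* Main.v *)
Require Import Defs.

Lemma gen (Fm : Type) (vd : (Fm -> Prop) -> Fm -> Prop)
  (Hcons : is_consequence vd) (c d : Fm -> Fm -> Fm) (n : Fm -> Fm)
  (HandP : conjP vd c) (HorP : disjP vd d) (HnegW : negW vd n) :
  (forall a b, vd (single (d (n a) (n b))) (n (c a b))) /\
  (negIl vd n -> forall a b, vd (single (n (c a b))) (d (n a) (n b))).
Proof.
  destruct Hcons as [Refl [Mono Cut]].
  assert (R1 : forall x, vd (single x) x) by (intro x; apply Refl; reflexivity).
  assert (T : forall x y z, vd (single x) y -> vd (single y) z -> vd (single x) z).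
  { intros x y z H1 H2. apply (Cut _ (single y)); auto.
    intros p Hp; unfold single in Hp; subst; auto. }
  assert (CA : forall a b, vd (single (c a b)) a).
  { intros a b. apply HandP. apply Refl. left; reflexivity. }
  assert (CB : forall a b, vd (single (c a b)) b).
  { intros a b. apply HandP. apply Refl. right; reflexivity. }
  split.
  - intros a b. apply HorP. split; apply HnegW; auto.
  - intros HIl a b.
    set (D := d (n a) (n b)).
    assert (HaD : vd (single (n a)) D).
    { pose proof (proj1 (HorP (n a) (n b) D) (R1 D)) as [h _]. exact h. }
    assert (HbD : vd (single (n b)) D).
    { pose proof (proj1 (HorP (n a) (n b) D) (R1 D)) as [_ h]. exact h. }
    assert (Ha : vd (single (n D)) a).
    { apply T with (n (n a)). apply HnegW; auto. apply HIl. apply R1. }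
    assert (Hb : vd (single (n D)) b).
    { apply T with (n (n b)). apply HnegW; auto. apply HIl. apply R1. }
    assert (Hc : vd (single (n D)) (c a b)).
    { apply (Cut _ (pair a b)).
      - apply HandP. apply R1.
      - intros p [-> | ->]; auto. }
    apply T with (n (n D)). apply HnegW; auto. apply HIl. apply R1.
Qed.

Theorem lemma2p1 (Op : Type) (ar : Op -> nat) (Var : Type)
  (vd : (term ar Var -> Prop) -> term ar Var -> Prop)
  (Hcons : is_consequence vd)
  (tand tor : term ar bool) (tneg : term ar unit)
  (HandP : conjP vd (binop tand))
  (HorP : disjP vd (binop tor))
  (HnegW : negW vd (unop tneg)) :
  (forall phi psi : term ar Var,
     vd (single (binop tor (unop tneg phi) (unop tneg psi)))
        (unop tneg (binop tand phi psi))) /\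
  (negIl vd (unop tneg) ->
   forall phi psi : term ar Var,
     vd (single (unop tneg (binop tand phi psi)))
        (binop tor (unop tneg phi) (unop tneg psi))).
Proof.
  exact (@gen _ vd Hcons _ _ _ HandP HorP HnegW).
Qed.
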